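(* Let $w_1,\dots,w_n$ be real weights, and let $a_1\ge\cdots\ge a_n$ and $b_1\ge\cdots\ge b_n$ be real numbers in $[a,b]$ such that $\min(a_i,b_i)\ge\max(a_{i+1},b_{i+1})$ for $1\le i<n$, \[ \sum_{i=1}^n w_ia_i=\sum_{i=1}^n w_ib_i,\qquad \sum_{i=1}^n w_ia_i^2=\sum_{i=1}^n w_ib_i^2, \] and \[ \sum_{i=1}^j w_i(a_i-a_{j+1})(a_i-b_{j+1})\ge\sum_{i=1}^j w_i(b_i-a_{j+1})(b_i-b_{j+1})\quad\text{for all }1\le j<n. \] Then $\sum_{i=1}^n w_if(a_i)\ge\sum_{i=1}^n w_if(b_i)$ for every three times differentiable $f:[a,b]\to\mathbb{R}$ with $f'''\ge 0$. *)

(* Defs.v *)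
From Stdlib Require Import Reals Lra.
Open Scope R_scope.

(* sum1 n f = f 1 + f 2 + ... + f n  (1-based indexing, as in the paper) *)
Fixpoint sum1 (n : nat) (f : nat -> R) : R :=
  match n with
  | O => 0
  | S k => sum1 k f + f (S k)
  end.

(* With D = [a,b] this gives one-sided derivatives at the endpoints. *)
Definition deriv_within (D : R -> Prop) (f : R -> R) (x l : R) : Prop :=
  forall eps : R, 0 < eps ->
    exists delta : R, 0 < delta /\
      forall y : R, D y -> y <> x -> Rabs (y - x) < delta ->
        Rabs ((f y - f x) / (y - x) - l) < eps.

Definition thrice_diff_nonneg3 (a b : R) (f : R -> R) : Prop :=
  let I := fun x => a <= x <= b in
  exists f1 f2 f3 : R -> R,
    forall x, I x ->
      deriv_within I f x (f1 x) /\
      deriv_within I f1 x (f2 x) /\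
      deriv_within I f2 x (f3 x) /\
      0 <= f3 x.

(* Main.v *)
Require Import Defs.
From Stdlib Require Import Reals Lra Lia.
Open Scope R_scope.

Lemma dlim_ext (g h : R -> R) x l :
  (forall y, g y = h y) -> derivable_pt_lim g x l -> derivable_pt_lim h x l.
Proof. intros E H eps Heps. destruct (H eps Heps) as [d Hd]. exists d.
  intros hh H1 H2. rewrite <- !E. auto. Qed.

Lemma dlim_eqv g x l l' : l = l' -> derivable_pt_lim g x l -> derivable_pt_lim g x l'.
Proof. intros ->; auto. Qed.

Lemma dl_mult g h x lg lh : derivable_pt_lim g x lg -> derivable_pt_lim h x lh ->
  derivable_pt_lim (fun y => g y * h y) x (lg * h x + g x * lh).
Proof. intros H1 H2; exact (derivable_pt_lim_mult g h x lg lh H1 H2). Qed.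
Lemma dl_minus g h x lg lh : derivable_pt_lim g x lg -> derivable_pt_lim h x lh ->
  derivable_pt_lim (fun y => g y - h y) x (lg - lh).
Proof. intros H1 H2; exact (derivable_pt_lim_minus g h x lg lh H1 H2). Qed.
Lemma dl_plus g h x lg lh : derivable_pt_lim g x lg -> derivable_pt_lim h x lh ->
  derivable_pt_lim (fun y => g y + h y) x (lg + lh).
Proof. intros H1 H2; exact (derivable_pt_lim_plus g h x lg lh H1 H2). Qed.
Lemma dl_const c x : derivable_pt_lim (fun _ => c) x 0.
Proof. exact (derivable_pt_lim_const c x). Qed.
Lemma dl_id x : derivable_pt_lim (fun y => y) x 1.
Proof. exact (derivable_pt_lim_id x). Qed.

Lemma within_interior a b f x l : a < x < b ->
  deriv_within (fun y => a <= y <= b) f x l -> derivable_pt_lim f x l.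
Proof.
  intros Hx H eps Heps. destruct (H eps Heps) as [d [Hd Hy]].
  assert (Hm : 0 < Rmin d (Rmin (x - a) (b - x))) by (repeat apply Rmin_pos; lra).
  exists (mkposreal _ Hm). intros h Hh0 Hh. simpl in Hh.
  pose proof (Rmin_l d (Rmin (x-a) (b-x))). pose proof (Rmin_r d (Rmin (x-a) (b-x))).
  pose proof (Rmin_l (x-a) (b-x)). pose proof (Rmin_r (x-a) (b-x)).
  apply Rabs_def2 in Hh as Hh'.
  specialize (Hy (x + h)). replace (x + h - x) with h in Hy by ring.
  apply Hy; [lra | lra | lra].
Qed.

Lemma within_cont a b f x l :
  deriv_within (fun y => a <= y <= b) f x l -> limit1_in f (fun y => a <= y <= b) (f x) x.
Proof.
  intros H eps Heps. destruct (H 1 Rlt_0_1) as [d [Hd Hy]].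
  pose proof (Rabs_pos l).
  exists (Rmin d (eps / (Rabs l + 1))). split.
  { apply Rmin_pos; [lra| apply Rdiv_lt_0_compat; lra]. }
  intros y [Dy Hdy]. simpl in Hdy |- *. unfold R_dist in *.
  pose proof (Rmin_l d (eps / (Rabs l + 1))). pose proof (Rmin_r d (eps / (Rabs l + 1))).
  destruct (Req_dec y x) as [->|Hne].
  { rewrite Rminus_diag, Rabs_R0; lra. }
  specialize (Hy y Dy Hne ltac:(lra)).
  set (q := (f y - f x) / (y - x)) in *.
  assert (E : f y - f x = q * (y - x)) by (unfold q; field; lra).
  rewrite E, Rabs_mult.
  assert (Rabs q <= Rabs l + 1).
  { replace q with ((q - l) + l) by ring. pose proof (Rabs_triang (q - l) l). lra. }
  assert (Rabs (y - x) < eps / (Rabs l + 1)) by lra.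
  pose proof (Rabs_pos q). pose proof (Rabs_pos (y - x)).
  apply Rle_lt_trans with ((Rabs l + 1) * Rabs (y - x)).
  { apply Rmult_le_compat_r; lra. }
  apply Rlt_le_trans with ((Rabs l + 1) * (eps / (Rabs l + 1))).
  { apply Rmult_lt_compat_l; lra. }
  right; field; lra.
Qed.

Lemma mono_lemma (Psi Psi' : R -> R) u v :
  u < v ->
  (forall t, u < t < v -> derivable_pt_lim Psi t (Psi' t)) ->
  (forall t, u < t < v -> Psi' t <= 0) ->
  (forall eps, 0 < eps -> exists d, 0 < d /\ forall t, u <= t <= v -> Rabs (t - u) < d -> Rabs (Psi t - Psi u) < eps) ->
  (forall eps, 0 < eps -> exists d, 0 < d /\ forall t, u <= t <= v -> Rabs (t - v) < d -> Rabs (Psi t - Psi v) < eps) ->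
  Psi v <= Psi u.
Proof.
  intros Huv Hd Hn Cu Cv.
  destruct (Rle_dec (Psi v) (Psi u)) as [H|H]; [exact H|]. exfalso. apply Rnot_le_lt in H.
  destruct (Cu ((Psi v - Psi u)/4)) as [d1 [Hd1 C1]]; [lra|].
  destruct (Cv ((Psi v - Psi u)/4)) as [d2 [Hd2 C2]]; [lra|].
  pose proof (Rmin_l d1 ((v-u)/3)). pose proof (Rmin_r d1 ((v-u)/3)).
  pose proof (Rmin_l d2 ((v-u)/3)). pose proof (Rmin_r d2 ((v-u)/3)).
  assert (0 < Rmin d1 ((v-u)/3)) by (apply Rmin_pos; lra).
  assert (0 < Rmin d2 ((v-u)/3)) by (apply Rmin_pos; lra).
  set (u' := u + Rmin d1 ((v-u)/3) / 2) in *.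
  set (v' := v - Rmin d2 ((v-u)/3) / 2) in *.
  destruct (MVT_cor2 Psi Psi' u' v') as [c [Hc1 Hc2]].
  { unfold u', v'; lra. }
  { intros c Hc; apply Hd; unfold u', v' in *; lra. }
  assert (Hc3 := Hn c ltac:(unfold u', v' in *; lra)).
  assert (Psi v' - Psi u' <= 0).
  { rewrite Hc1. assert (0 < v' - u') by (unfold u', v'; lra). nra. }
  specialize (C1 u' ltac:(unfold u'; lra)).
  specialize (C2 v' ltac:(unfold v'; lra)).
  rewrite Rabs_pos_eq in C1 by (unfold u'; lra).
  rewrite Rabs_left in C2 by (unfold v'; lra).
  specialize (C1 ltac:(unfold u'; lra)). specialize (C2 ltac:(unfold v'; lra)).
  apply Rabs_def2 in C1. apply Rabs_def2 in C2. lra.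
Qed.

Definition Tay (f f1 f2 : R -> R) (t x : R) : R :=
  f x - f t - f1 t * (x - t) - f2 t * ((x - t) * (x - t)) * / 2.

Lemma Tay_self f f1 f2 t : Tay f f1 f2 t t = 0.
Proof. unfold Tay; field. Qed.

Lemma Tay_deriv (f f1 f2 f3 : R -> R) t x :
  derivable_pt_lim f t (f1 t) -> derivable_pt_lim f1 t (f2 t) -> derivable_pt_lim f2 t (f3 t) ->
  derivable_pt_lim (fun s => Tay f f1 f2 s x) t (- f3 t * ((x - t) * (x - t)) * / 2).
Proof.
  intros Hf Hf1 Hf2.
  assert (Hxs : derivable_pt_lim (fun s => x - s) t (0 - 1)) by (apply dl_minus; [apply dl_const | apply dl_id]).
  pose proof (dl_minus _ _ t _ _ (dl_minus _ _ t _ _ (dl_minus _ _ t _ _ (dl_const (f x) t) Hf)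
     (dl_mult _ _ t _ _ Hf1 Hxs))
     (dl_mult _ _ t _ _ (dl_mult _ _ t _ _ Hf2 (dl_mult _ _ t _ _ Hxs Hxs)) (dl_const (/2) t))) as H.
  eapply dlim_eqv; [| eapply dlim_ext; [| exact H]].
  - cbv beta. field.
  - intros y; cbv beta; unfold Tay; reflexivity.
Qed.

Lemma lim_ext f g D l x0 : (forall y, f y = g y) -> limit1_in f D l x0 -> limit1_in g D l x0.
Proof. intros E H eps He. destruct (H eps He) as [a [Ha Hb]]. exists a; split; auto.
  intros y Hy. rewrite <- E. auto. Qed.
Lemma lim_eqv f D l l' x0 : l = l' -> limit1_in f D l x0 -> limit1_in f D l' x0.
Proof. intros ->; auto. Qed.
Lemma lim_id D x0 : limit1_in (fun y => y) D x0 x0.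
Proof. intros eps He. exists eps; split; auto. intros y [_ Hy]. exact Hy. Qed.
Lemma lim_const D c x0 : limit1_in (fun _ => c) D c x0.
Proof. intros eps He. exists 1; split; [lra|]. intros y _. simpl. unfold R_dist.
  rewrite Rminus_diag, Rabs_R0; lra. Qed.

Lemma Tay_cont (f f1 f2 : R -> R) D t x :
  limit1_in f D (f t) t -> limit1_in f1 D (f1 t) t -> limit1_in f2 D (f2 t) t ->
  limit1_in (fun s => Tay f f1 f2 s x) D (Tay f f1 f2 t x) t.
Proof.
  intros Hf Hf1 Hf2.
  assert (Hxs : limit1_in (fun s => x - s) D (x - t) t) by (apply limit_minus; [apply lim_const | apply lim_id]).
  pose proof (limit_minus _ _ _ _ _ _ (limit_minus _ _ _ _ _ _ (limit_minus _ _ _ _ _ _ (lim_const D (f x) t) Hf)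
     (limit_mul _ _ _ _ _ _ Hf1 Hxs))
     (limit_mul _ _ _ _ _ _ (limit_mul _ _ _ _ _ _ Hf2 (limit_mul _ _ _ _ _ _ Hxs Hxs)) (lim_const D (/2) t))) as H.
  eapply lim_eqv; [| eapply lim_ext; [| exact H]].
  - unfold Tay; reflexivity.
  - intros y; cbv beta; unfold Tay; reflexivity.
Qed.

Lemma dl_sum1 (F : nat -> R -> R) (F' : nat -> R) t k :
  (forall i, derivable_pt_lim (F i) t (F' i)) ->
  derivable_pt_lim (fun s => sum1 k (fun i => F i s)) t (sum1 k F').
Proof.
  intros H. induction k as [|k IH]; simpl.
  - apply dl_const.
  - apply (dl_plus (fun s => sum1 k (fun i => F i s)) (F (S k))); auto.
Qed.

Lemma lim_sum1 (F : nat -> R -> R) D t k :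
  (forall i, limit1_in (F i) D (F i t) t) ->
  limit1_in (fun s => sum1 k (fun i => F i s)) D (sum1 k (fun i => F i t)) t.
Proof.
  intros H. induction k as [|k IH]; simpl.
  - apply lim_const.
  - apply (limit_plus (fun s => sum1 k (fun i => F i s)) (F (S k))); auto.
Qed.

Lemma sum1_ext_le n f g : (forall i, (1 <= i <= n)%nat -> f i = g i) -> sum1 n f = sum1 n g.
Proof. induction n; simpl; intros H; auto. rewrite IHn, H; [reflexivity|lia|]. intros; apply H; lia. Qed.

Lemma sum1_scal n c f : sum1 n (fun i => c * f i) = c * sum1 n f.
Proof. induction n; simpl; [ring|rewrite IHn; ring]. Qed.
Lemma sum1_plus n f g : sum1 n (fun i => f i + g i) = sum1 n f + sum1 n g.
Proof. induction n; simpl; [ring|rewrite IHn; ring]. Qed.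
Lemma sum1_minus n f g : sum1 n (fun i => f i - g i) = sum1 n f - sum1 n g.
Proof. induction n; simpl; [ring|rewrite IHn; ring]. Qed.
Lemma sum1_zero n f : (forall i, (1 <= i <= n)%nat -> f i = 0) -> sum1 n f = 0.
Proof. induction n; simpl; intros H; auto. rewrite IHn, H; [ring|lia|]. intros; apply H; lia. Qed.

Definition ppos (t x : R) : R := if Rlt_dec t x then (x - t) * (x - t) else 0.
Definition Gf n (w A B : nat -> R) t := sum1 n (fun i => w i * (ppos t (A i) - ppos t (B i))).
Definition S1 j (w A B : nat -> R) := sum1 j (fun i => w i * (A i - B i)).
Definition S2 j (w A B : nat -> R) := sum1 j (fun i => w i * (A i * A i - B i * B i)).
Definition L j w A B x := S2 j w A B - 2 * x * S1 j w A B.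
Definition mid (A B : nat -> R) i := (A i + B i) / 2.

Lemma lin_pos al be x1 x2 t : x1 <= t <= x2 -> 0 <= al + be * x1 -> 0 <= al + be * x2 -> 0 <= al + be * t.
Proof. intros. destruct (Rle_dec 0 be); nra. Qed.

Lemma overlap al be c P Q t : Q <= t < P ->
  0 <= al + be * ((P + Q) / 2) -> 0 <= al + be * P ->
  0 <= al + be * Q + c * ((P - Q) * (P - Q)) ->
  0 <= al + be * t + c * ((P - t) * (P - t)).
Proof.
  intros Ht Hm HP HQ.
  destruct (Rle_dec c 0) as [Hc|Hc].
  - assert (E : (P - Q) * (al + be * t + c * ((P - t) * (P - t))) =
       (P - t) * (al + be * Q + c * ((P - Q) * (P - Q))) + (t - Q) * (al + be * P)
       + (- c) * ((P - Q) * (P - t) * (t - Q))) by ring.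
    assert (0 <= (P - Q) * (al + be * t + c * ((P - t) * (P - t)))).
    { rewrite E. assert (0 <= (P - t) * (al + be * Q + c * ((P - Q) * (P - Q)))) by (apply Rmult_le_pos; lra).
      assert (0 <= (t - Q) * (al + be * P)) by (apply Rmult_le_pos; lra).
      assert (0 <= (P - Q) * (P - t) * (t - Q)) by (repeat apply Rmult_le_pos; lra).
      assert (0 <= - c * ((P - Q) * (P - t) * (t - Q))) by (apply Rmult_le_pos; lra).
      lra. }
    destruct (Rle_dec 0 (al + be * t + c * ((P - t) * (P - t)))) as [h|h]; auto.
    exfalso. assert (0 < P - Q) by lra. nra.
  - destruct (Rle_dec ((P + Q)/2) t) as [Hm'|Hm'].
    + assert (0 <= al + be * t) by (apply (lin_pos al be ((P+Q)/2) P t); lra).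
      assert (0 <= (P - t) * (P - t)) by nra. nra.
    + set (al' := al + c * (P - Q) * (P + Q)). set (be' := be - 2 * c * (P - Q)).
      assert (0 <= al' + be' * t).
      { apply (lin_pos al' be' Q ((P+Q)/2) t); unfold al', be'.
        - lra.
        - replace (al + c * (P - Q) * (P + Q) + (be - 2 * c * (P - Q)) * Q) with
            (al + be * Q + c * ((P - Q) * (P - Q))) by ring. lra.
        - replace (al + c * (P - Q) * (P + Q) + (be - 2 * c * (P - Q)) * ((P + Q) / 2)) with
            (al + be * ((P + Q) / 2)) by field. lra. }
      replace (al + be * t + c * ((P - t) * (P - t))) with (al' + be' * t + c * ((Q - t) * (Q - t)))
        by (unfold al', be'; ring).
      assert (0 <= (Q - t) * (Q - t)) by nra. nra.
Qed.

Lemma mid_bounds (A B : nat -> R) i : Rmin (A i) (B i) <= mid A B i <= Rmax (A i) (B i).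
Proof. unfold mid, Rmin, Rmax; destruct Rle_dec; lra. Qed.

Lemma L0 w A B x : L 0 w A B x = 0.
Proof. unfold L, S1, S2; simpl; ring. Qed.

Lemma LS j w A B x : L (S j) w A B x = L j w A B x + w (S j) * ((A (S j) - x) * (A (S j) - x) - (B (S j) - x) * (B (S j) - x)).
Proof. unfold L, S1, S2; simpl; ring. Qed.

Lemma Lphi j w A B t : sum1 j (fun i => w i * ((A i - t) * (A i - t) - (B i - t) * (B i - t))) = L j w A B t.
Proof. induction j. - rewrite L0; reflexivity. - rewrite LS; simpl; rewrite IHj; ring. Qed.

Lemma h3E j (w A B : nat -> R) P Q : sum1 j (fun i => w i * (A i - P) * (A i - Q)) - sum1 j (fun i => w i * (B i - P) * (B i - Q))
     = S2 j w A B - (P + Q) * S1 j w A B.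
Proof. unfold S1, S2; induction j; simpl; [ring|]. nra. Qed.

Lemma h3_to_L j w A B :
  sum1 j (fun i => w i * (A i - A (S j)) * (A i - B (S j)))
  >= sum1 j (fun i => w i * (B i - A (S j)) * (B i - B (S j))) ->
  0 <= L j w A B (mid A B (S j)).
Proof.
  intros H. pose proof (h3E j w A B (A (S j)) (B (S j))) as E. unfold L, mid.
  replace (2 * ((A (S j) + B (S j)) / 2)) with (A (S j) + B (S j)) by field.
  replace (S2 j w A B - 2 * ((A (S j) + B (S j)) / 2) * S1 j w A B) with (S2 j w A B - (A (S j) + B (S j)) * S1 j w A B) by field.
  lra.
Qed.

Lemma L_lin j w A B x : L j w A B x = S2 j w A B + (-2 * S1 j w A B) * x.
Proof. unfold L; ring. Qed.

Lemma Lpos n w A B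
 (HK : forall j, (j < n)%nat -> 0 <= L j w A B (mid A B (S j)))
 (HZ : forall x, L n w A B x = 0) :
 forall k, (k <= n)%nat -> forall x, (k = n \/ mid A B (S k) <= x) -> (k = 0%nat \/ x <= mid A B k) ->
 0 <= L k w A B x.
Proof.
  intros k Hk x H1 H2. destruct k as [|k]. { rewrite L0; lra. }
  destruct (Nat.eq_dec (S k) n) as [E|E]. { rewrite E, HZ; lra. }
  destruct H1 as [H1|H1]; [congruence|]. destruct H2 as [H2|H2]; [discriminate|].
  assert (V1 := HK (S k) ltac:(lia)).
  assert (V2 : 0 <= L (S k) w A B (mid A B (S k))).
  { rewrite LS. assert (V := HK k ltac:(lia)).
    replace ((A (S k) - mid A B (S k)) * (A (S k) - mid A B (S k)) -
      (B (S k) - mid A B (S k)) * (B (S k) - mid A B (S k))) with 0 by (unfold mid; field). lra. }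
  rewrite L_lin in *. eapply lin_pos; [| exact V1 | exact V2]. lra.
Qed.

Lemma exists_j n (A B : nat -> R) t : forall k, (k <= n)%nat -> exists j, (j <= k)%nat /\
  (forall i, (1 <= i <= j)%nat -> t <= Rmin (A i) (B i)) /\ ((j < k)%nat -> Rmin (A (S j)) (B (S j)) < t).
Proof.
  induction k as [|k IH]; intros Hk.
  - exists 0%nat; split; [lia|]; split; [intros; lia| intros; lia].
  - destruct (IH ltac:(lia)) as [j [Hj [H1 H2]]].
    destruct (Nat.eq_dec j k) as [->|Ne].
    + destruct (Rle_dec t (Rmin (A (S k)) (B (S k)))) as [r|r].
      * exists (S k); split; [lia|]; split; [|intros; lia].
        intros i Hi. destruct (Nat.eq_dec i (S k)) as [->|]; [exact r|apply H1; lia].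
      * exists k; split; [lia|]; split; [exact H1|]. intros; lra.
    + exists j; split; [lia|]; split; [exact H1|]. intros; apply H2; lia.
Qed.

Lemma chain n (A B : nat -> R)
 (hsep : forall i, (1 <= i < n)%nat -> Rmin (A i) (B i) >= Rmax (A (S i)) (B (S i))) :
 forall i k, (1 <= k)%nat -> (k < i <= n)%nat -> Rmax (A i) (B i) <= Rmin (A k) (B k).
Proof.
  induction i as [|i IH]; intros k Hk Hi; [lia|].
  destruct (Nat.eq_dec i k) as [->|Ne]. { pose proof (hsep k ltac:(lia)); lra. }
  pose proof (IH k Hk ltac:(lia)). pose proof (hsep i ltac:(lia)).
  assert (Rmin (A i) (B i) <= Rmax (A i) (B i)) by (unfold Rmin, Rmax; destruct Rle_dec; lra). lra.
Qed.

Lemma sum1_add j k g : sum1 (j + k) g = sum1 j g + sum1 k (fun i => g (j + i)%nat).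
Proof. induction k; simpl. - rewrite Nat.add_0_r; ring. - rewrite Nat.add_succ_r; simpl; rewrite IHk; ring. Qed.

Lemma sum1_first r h : sum1 (S r) h = h 1%nat + sum1 r (fun i => h (S i)).
Proof. induction r; simpl in *. - ring. - rewrite IHr; ring. Qed.

Lemma pos_ge t x : t <= x -> ppos t x = (x - t) * (x - t).
Proof. intros; unfold ppos; destruct Rlt_dec; [reflexivity| assert (x = t) by lra; subst; ring]. Qed.
Lemma pos_le t x : x <= t -> ppos t x = 0.
Proof. intros; unfold ppos; destruct Rlt_dec; [lra|reflexivity]. Qed.

Lemma G_nonneg n w A B t
 (hsep : forall i, (1 <= i < n)%nat -> Rmin (A i) (B i) >= Rmax (A (S i)) (B (S i)))
 (HK : forall j, (j < n)%nat -> 0 <= L j w A B (mid A B (S j)))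
 (HZ : forall x, L n w A B x = 0) :
 0 <= Gf n w A B t.
Proof.
  destruct (exists_j n A B t n (le_n n)) as [j [Hj [H1 H2]]].
  assert (Hi : forall i, (1 <= i <= j)%nat -> t <= A i /\ t <= B i).
  { intros i Hi'. specialize (H1 i Hi'). unfold Rmin in H1; destruct Rle_dec; lra. }
  assert (HL : sum1 j (fun i => w i * (ppos t (A i) - ppos t (B i))) = L j w A B t).
  { rewrite <- Lphi. apply sum1_ext_le. intros i Hi'. destruct (Hi i Hi').
    rewrite !pos_ge by lra. reflexivity. }
  unfold Gf.
  destruct (Nat.eq_dec j n) as [<-|Ne]. { rewrite HL, HZ; lra. }
  specialize (H2 ltac:(lia)).
  replace n with (j + S (n - j - 1))%nat by lia.
  rewrite sum1_add, sum1_first, HL.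
  rewrite (sum1_zero (n - j - 1)).
  2:{ intros i Hi'. pose proof (chain n A B hsep (j + S i) (S j) ltac:(lia) ltac:(lia)).
      rewrite !pos_le; [ring | |]; unfold Rmax in *; destruct Rle_dec; lra. }
  rewrite Nat.add_1_r.
  pose proof (Lpos n w A B HK HZ) as LP.
  set (P := A (S j)) in *. set (Q := B (S j)) in *. set (c := w (S j)) in *.
  assert (Hsep' : j = 0%nat \/ Rmax P Q <= Rmin (A j) (B j)).
  { destruct j; [left; reflexivity| right; pose proof (hsep (S j) ltac:(lia)); unfold P, Q; lra]. }
  assert (Hmj : j = 0%nat \/ t <= Rmin (A j) (B j)).
  { destruct j; [left; reflexivity| right; apply H1; lia]. }
  pose proof (mid_bounds A B j) as MBj. pose proof (mid_bounds A B (S j)) as MBs.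
  assert (Hnext : S j = n \/ Rmin P Q >= mid A B (S (S j))).
  { destruct (Nat.eq_dec (S j) n) as [E|E]; [left; exact E|right].
    pose proof (hsep (S j) ltac:(lia)). pose proof (mid_bounds A B (S (S j))). unfold P, Q. lra. }
  assert (Mid : mid A B (S j) = (P + Q) / 2) by reflexivity.
  assert (LSj : forall x, L (S j) w A B x = L j w A B x + c * ((P - x) * (P - x) - (Q - x) * (Q - x)))
    by (intros; apply LS).
  fold P Q in MBs.
  destruct (Rle_dec P t) as [HPt|HPt]; destruct (Rle_dec Q t) as [HQt|HQt].
  - rewrite !pos_le by lra.
    assert (0 <= L j w A B t).
    { apply LP; [lia| right; unfold Rmax in MBs; destruct Rle_dec; lra |].
      destruct Hmj as [Hm|Hm]; [left; exact Hm| right; lra]. }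
    lra.
  - rewrite (pos_le t P) by lra. rewrite (pos_ge t Q) by lra.
    assert (A1 : 0 <= L j w A B ((Q + P) / 2)).
    { replace ((Q + P) / 2) with ((P + Q)/2) by field. rewrite <- Mid. apply LP; [lia| right; lra|].
      destruct Hsep' as [Hm|Hm]; [left; exact Hm| right; lra]. }
    assert (A2 : 0 <= L j w A B Q).
    { apply LP; [lia| right; rewrite Mid; lra|].
      destruct Hsep' as [Hm|Hm]; [left; exact Hm| right; unfold Rmax in Hm; destruct Rle_dec; lra]. }
    assert (A3 : 0 <= L (S j) w A B P).
    { apply LP; [lia| |right; rewrite Mid; lra].
      destruct Hnext as [E|E]; [left; exact E| right; unfold Rmin in E; destruct Rle_dec; lra]. }
    rewrite LSj in A3. rewrite L_lin in *.
    replace ((P - P) * (P - P) - (Q - P) * (Q - P)) with (- ((Q - P) * (Q - P))) in A3 by ring.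
    pose proof (overlap _ _ (- c) Q P t ltac:(lra) A1 A2 ltac:(lra)). lra.
  - rewrite (pos_le t Q) by lra. rewrite (pos_ge t P) by lra.
    assert (A1 : 0 <= L j w A B ((P + Q) / 2)).
    { rewrite <- Mid. apply LP; [lia| right; lra|].
      destruct Hsep' as [Hm|Hm]; [left; exact Hm| right; lra]. }
    assert (A2 : 0 <= L j w A B P).
    { apply LP; [lia| right; rewrite Mid; lra|].
      destruct Hsep' as [Hm|Hm]; [left; exact Hm| right; unfold Rmax in Hm; destruct Rle_dec; lra]. }
    assert (A3 : 0 <= L (S j) w A B Q).
    { apply LP; [lia| |right; rewrite Mid; lra].
      destruct Hnext as [E|E]; [left; exact E| right; unfold Rmin in E; destruct Rle_dec; lra]. }
    rewrite LSj in A3. rewrite L_lin in *.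
    replace ((P - Q) * (P - Q) - (Q - Q) * (Q - Q)) with ((P - Q) * (P - Q)) in A3 by ring.
    pose proof (overlap _ _ c P Q t ltac:(lra) A1 A2 A3). lra.
  - exfalso. unfold Rmin in H2; destruct Rle_dec; lra.
Qed.

Definition indc (t x : R) : R := if Rle_dec t x then 1 else 0.
Definition Phi n (w A B : nat -> R) f f1 f2 t :=
  sum1 n (fun i => w i * indc t (A i) * Tay f f1 f2 t (A i) - w i * indc t (B i) * Tay f f1 f2 t (B i)).
Definition Psi n (w A B : nat -> R) f f1 f2 v t :=
  sum1 n (fun i => w i * indc v (A i) * Tay f f1 f2 t (A i) - w i * indc v (B i) * Tay f f1 f2 t (B i)).



Lemma ind_swap (f f1 f2 : R -> R) u v x : u < v -> ~ (u < x < v) ->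
  indc u x * Tay f f1 f2 u x = indc v x * Tay f f1 f2 u x.
Proof.
  intros Huv Hx. unfold indc. destruct (Rle_dec u x); destruct (Rle_dec v x); try lra.
  assert (x = u) by lra. subst. rewrite Tay_self; ring.
Qed.

Lemma ind_ppos u v t x : u < t < v -> ~ (u < x < v) -> indc v x * ((x - t) * (x - t)) = ppos t x.
Proof.
  intros Ht Hx. unfold indc, ppos. destruct (Rle_dec v x); destruct (Rlt_dec t x); try lra.
Qed.

Lemma base n w A B a b f f1 f2 f3
  (Hd : forall x, a <= x <= b -> deriv_within (fun y => a <= y <= b) f x (f1 x) /\
         deriv_within (fun y => a <= y <= b) f1 x (f2 x) /\
         deriv_within (fun y => a <= y <= b) f2 x (f3 x) /\ 0 <= f3 x)
  (HG : forall t, 0 <= Gf n w A B t) u v :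
  a <= u -> u < v -> v <= b ->
  (forall i, (1 <= i <= n)%nat -> ~ (u < A i < v) /\ ~ (u < B i < v)) ->
  Phi n w A B f f1 f2 v <= Phi n w A B f f1 f2 u.
Proof.
  intros Hau Huv Hvb Hout.
  assert (E : Phi n w A B f f1 f2 u = Psi n w A B f f1 f2 v u).
  { unfold Phi, Psi. apply sum1_ext_le. intros i Hi. destruct (Hout i Hi) as [HA HB].
    rewrite !Rmult_assoc, (ind_swap f f1 f2 u v (A i)), (ind_swap f f1 f2 u v (B i)) by assumption. reflexivity. }
  rewrite E. change (Phi n w A B f f1 f2 v) with (Psi n w A B f f1 f2 v v).
  set (I := fun y => a <= y <= b).
  assert (Cont : forall t, a <= t <= b -> limit1_in (Psi n w A B f f1 f2 v) I (Psi n w A B f f1 f2 v t) t).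
  { intros t Ht. destruct (Hd t Ht) as [D1 [D2 [D3 _]]].
    apply (lim_sum1 (fun i s => w i * indc v (A i) * Tay f f1 f2 s (A i) - w i * indc v (B i) * Tay f f1 f2 s (B i))).
    intros i. apply limit_minus; apply limit_mul; try apply lim_const;
      apply Tay_cont; eapply within_cont; eassumption. }
  assert (ToEps : forall t, a <= t <= b -> forall eps, 0 < eps -> exists d, 0 < d /\
     forall s, u <= s <= v -> Rabs (s - t) < d -> Rabs (Psi n w A B f f1 f2 v s - Psi n w A B f f1 f2 v t) < eps).
  { intros t Ht eps He. destruct (Cont t Ht eps He) as [d [Hd0 Hdd]]. exists d; split; [exact Hd0|].
    intros s Hs Hst. apply (Hdd s). split; [unfold I; lra| exact Hst]. }
  apply (mono_lemma _ (fun t => sum1 n (fun i => w i * indc v (A i) * (- f3 t * ((A i - t) * (A i - t)) * / 2)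
                         - w i * indc v (B i) * (- f3 t * ((B i - t) * (B i - t)) * / 2)))).
  - exact Huv.
  - intros t Ht. destruct (Hd t ltac:(lra)) as [D1 [D2 [D3 _]]].
    apply within_interior in D1; [|lra]. apply within_interior in D2; [|lra]. apply within_interior in D3; [|lra].
    apply (dl_sum1 (fun i s => w i * indc v (A i) * Tay f f1 f2 s (A i) - w i * indc v (B i) * Tay f f1 f2 s (B i))).
    intros i. eapply dlim_eqv; cycle 1.
    { apply dl_minus; apply dl_mult; [apply dl_const | apply Tay_deriv; eassumption
         | apply dl_const | apply Tay_deriv; eassumption]. }
    cbv beta; ring.
  - intros t Ht. destruct (Hd t ltac:(lra)) as [_ [_ [_ H3]]].
    rewrite (sum1_ext_le n _ (fun i => (- f3 t * / 2) * (w i * (ppos t (A i) - ppos t (B i))))).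
    + rewrite sum1_scal. pose proof (HG t) as G. unfold Gf in G.
      assert (0 <= f3 t * / 2 * sum1 n (fun i => w i * (ppos t (A i) - ppos t (B i)))).
      { apply Rmult_le_pos; [|exact G]. apply Rmult_le_pos; lra. }
      lra.
    + intros i Hi. destruct (Hout i Hi) as [HA HB].
      rewrite <- (ind_ppos u v t (A i)), <- (ind_ppos u v t (B i)) by assumption. ring.
  - apply ToEps; lra.
  - apply ToEps; lra.
Qed.

Lemma split_pt (Ph : R -> R) (P : R -> R -> Prop) x :
  (forall u v u' v', u <= u' -> v' <= v -> u' <= v' -> P u v -> P u' v') ->
  (forall u v, u <= v -> P u v -> ~ (u < x < v) -> Ph v <= Ph u) ->
  forall u v, u <= v -> P u v -> Ph v <= Ph u.
Proof.
  intros Hmon H u v Huv Puv.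
  destruct (Rlt_dec u x) as [h1|h1]; [destruct (Rlt_dec x v) as [h2|h2]|].
  - assert (Ph x <= Ph u) by (apply H; [lra| apply (Hmon u v); [lra|lra|lra|exact Puv] | lra]).
    assert (Ph v <= Ph x) by (apply H; [lra| apply (Hmon u v); [lra|lra|lra|exact Puv] | lra]).
    lra.
  - apply H; auto; lra.
  - apply H; auto; lra.
Qed.

Lemma chain_all (Ph : R -> R) n (A B : nat -> R) a b
  (Hbase : forall u v, a <= u -> u < v -> v <= b ->
     (forall i, (1 <= i <= n)%nat -> ~ (u < A i < v) /\ ~ (u < B i < v)) -> Ph v <= Ph u) :
  forall N, forall u v, u <= v -> a <= u -> v <= b ->
     (forall i, (N < i <= n)%nat -> ~ (u < A i < v) /\ ~ (u < B i < v)) -> Ph v <= Ph u.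
Proof.
  induction N as [|N IH]; intros u v Huv Hau Hvb Hout.
  - destruct (Req_dec u v) as [->|Ne]; [lra|]. apply Hbase; [exact Hau | lra | exact Hvb | intros i Hi; apply Hout; lia].
  - set (P1 := fun u v => a <= u /\ v <= b /\
          forall i, (S N < i <= n)%nat -> ~ (u < A i < v) /\ ~ (u < B i < v)).
    assert (M1 : forall u v u' v', u <= u' -> v' <= v -> u' <= v' -> P1 u v -> P1 u' v').
    { intros u0 v0 u' v' H1 H2 H3 [Ha [Hb Ho]]. split; [lra|split; [lra|]].
      intros i Hi. destruct (Ho i Hi). split; intros C; [apply H|apply H0]; lra. }
    apply (split_pt Ph P1 (A (S N))); [exact M1| | exact Huv | split; [exact Hau| split; [exact Hvb| exact Hout]]].
    intros u0 v0 Huv0 HP0 HA0.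
    set (P2 := fun u v => P1 u v /\ ~ (u < A (S N) < v)).
    apply (split_pt Ph P2 (B (S N))); [| | exact Huv0 | split; [exact HP0 | exact HA0]].
    + intros u1 v1 u' v' H1 H2 H3 [HP HA]. split; [apply (M1 u1 v1); auto|]. intros C; apply HA; lra.
    + intros u1 v1 Huv1 [[Ha [Hb Ho]] HA] HB. apply IH; auto.
      intros i Hi. destruct (Nat.eq_dec i (S N)) as [->|Ne]; [split; assumption|]. apply Ho; lia.
Qed.

Theorem mainTheorem11 (n : nat) (w A B : nat -> R) (a b : R)
  (hA_dec : forall i, (1 <= i < n)%nat -> A (S i) <= A i)
  (hB_dec : forall i, (1 <= i < n)%nat -> B (S i) <= B i)
  (hA_rng : forall i, (1 <= i <= n)%nat -> a <= A i <= b)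
  (hB_rng : forall i, (1 <= i <= n)%nat -> a <= B i <= b)
  (hsep : forall i, (1 <= i < n)%nat ->
            Rmin (A i) (B i) >= Rmax (A (S i)) (B (S i)))
  (h1 : sum1 n (fun i => w i * A i) = sum1 n (fun i => w i * B i))
  (h2 : sum1 n (fun i => w i * (A i)^2) = sum1 n (fun i => w i * (B i)^2))
  (h3 : forall j, (1 <= j < n)%nat ->
          sum1 j (fun i => w i * (A i - A (S j)) * (A i - B (S j)))
          >= sum1 j (fun i => w i * (B i - A (S j)) * (B i - B (S j))))
  (f : R -> R) (hf : thrice_diff_nonneg3 a b f) :
  sum1 n (fun i => w i * f (A i)) >= sum1 n (fun i => w i * f (B i)).
Proof.
  destruct n as [|n0]. { simpl; lra. }
  set (n := S n0) in *.
  assert (Hab : a <= b) by (destruct (hA_rng 1%nat ltac:(unfold n; lia)); lra).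
  destruct hf as [f1 [f2 [f3 Hd]]].
  assert (HS1 : S1 n w A B = 0).
  { unfold S1. rewrite (sum1_ext_le n _ (fun i => w i * A i - w i * B i)) by (intros; ring).
    rewrite sum1_minus, h1; ring. }
  assert (HS2 : S2 n w A B = 0).
  { unfold S2. rewrite (sum1_ext_le n _ (fun i => w i * (A i)^2 - w i * (B i)^2)) by (intros; ring).
    rewrite sum1_minus, h2; ring. }
  assert (HZ : forall x, L n w A B x = 0) by (intros; unfold L; rewrite HS1, HS2; ring).
  assert (HK : forall j, (j < n)%nat -> 0 <= L j w A B (mid A B (S j))).
  { intros j Hj. destruct j as [|j]; [rewrite L0; lra|]. apply h3_to_L, h3; lia. }
  assert (HG : forall t, 0 <= Gf n w A B t) by (intros; apply G_nonneg; auto).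
  assert (Mono : Phi n w A B f f1 f2 b <= Phi n w A B f f1 f2 a).
  { apply (chain_all (Phi n w A B f f1 f2) n A B a b) with (N := n); auto; try lra.
    - intros u v Hau Huv Hvb Hout. eapply base; eauto.
    - intros i Hi; lia. }
  assert (Pb : Phi n w A B f f1 f2 b = 0).
  { unfold Phi. apply sum1_zero. intros i Hi. destruct (hA_rng i Hi), (hB_rng i Hi).
    assert (Z : forall x, x <= b -> indc b x * Tay f f1 f2 b x = 0).
    { intros x Hx. unfold indc. destruct (Rle_dec b x). - replace x with b by lra. rewrite Tay_self; ring. - ring. }
    rewrite !Rmult_assoc, !Z by lra. ring. }
  assert (Pa : Phi n w A B f f1 f2 a = sum1 n (fun i => w i * f (A i)) - sum1 n (fun i => w i * f (B i))).
  { unfold Phi.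
    rewrite (sum1_ext_le n _ (fun i => (w i * f (A i) - w i * f (B i)) - f1 a * (w i * A i - w i * B i)
        - (f2 a * / 2) * ((w i * (A i)^2 - w i * (B i)^2) - 2 * a * (w i * A i - w i * B i)))).
    - rewrite !sum1_minus, !sum1_scal, !sum1_minus, sum1_scal, !sum1_minus, h1, h2. ring.
    - intros i Hi. destruct (hA_rng i Hi), (hB_rng i Hi). unfold indc, Tay.
      destruct (Rle_dec a (A i)); [|lra]. destruct (Rle_dec a (B i)); [|lra]. field. }
  lra.
Qed.
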